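(* Let $A$ be a finite alphabet and $x\in A^{\mathbb N}$ an infinite word. Then there exists a quasiperiodic infinite word $y$ (over some finite alphabet) that is complexity equivalent to $x$, i.e. there is a positive integer $K$ such that for all $n\geq 1$, $p_n(x)\leq K\,p_{Kn}(y)$ and $p_n(y)\leq K\,p_{Kn}(x)$. *)

(* Defs.v *)
From mathcomp Require Import all_boot.
From mathcomp Require Import boolp.
Set Implicit Arguments. Unset Strict Implicit. Unset Printing Implicit Defensive.

Definition factor_at (A : Type) (x : nat -> A) (i n : nat) : n.-tuple A :=
  [tuple x (i + k) | k < n].

Definition complexity (A : finType) (x : nat -> A) (n : nat) : nat :=
  #|[set t : n.-tuple A | `[< exists i : nat, t = factor_at x i n >]]|.

Definition quasiperiodic (B : Type) (y : nat -> B) : Prop :=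
  exists (m : nat) (q : m.-tuple B), 0 < m /\
    forall i : nat, exists j : nat, j <= i < j + m /\ factor_at y j m = q.

Definition complexity_equivalent (A B : finType) (x : nat -> A) (y : nat -> B)
  : Prop :=
  exists K : nat, 0 < K /\
    forall n : nat, 1 <= n ->
      complexity x n <= K * complexity y (K * n) /\
      complexity y n <= K * complexity x (K * n).

(* Main.v *)
Require Import Defs.
From mathcomp Require Import all_boot.
From mathcomp Require Import boolp zify.

Definition blk (i j : nat) : bool := if j <= 2*i+2 then ~~ odd j else odd j.

Lemma blk_inj N i i' : i < N -> i' < N ->
  (forall s, s < 2*N+1 -> blk i s = blk i' s) -> i = i'.
Proof.
move=> hi hi' H; apply/eqP; rewrite eqn_leq; apply/andP; split;
  rewrite leqNgt; apply/negP => lt.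
- have := H (2*i'+3); rewrite /blk; case: ifP; case: ifP => ? ? e; lia.
- have := H (2*i+3); rewrite /blk; case: ifP; case: ifP => ? ? e; lia.
Qed.

Lemma cover N i r : i < N -> r < 2*N+1 -> exists s, s <= r <= s + 2 /\ s + 2 <= 2*N+1 /\
  blk i s /\ ~~ blk i (s+1) /\ blk i (s+2).
Proof.
move=> hi hrN.
case: (leqP r (2*i+2)) => hr.
  case: (boolP (odd r)) => ho.
    exists (r-1); rewrite /blk; do 3 (case: ifP => ?); lia.
  case: (leqP r (2*i)) => hr2.
    exists r; rewrite /blk; do 3 (case: ifP => ?); lia.
  exists (2*i); rewrite /blk; do 3 (case: ifP => ?); lia.
case: (boolP (odd r)) => ho.
  exists r; rewrite /blk; do 3 (case: ifP => ?); lia.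
exists (r-1); rewrite /blk; do 3 (case: ifP => ?); lia.
Qed.

Section Main.
Variables (A : finType) (x : nat -> A).
Definition N := #|A|.
Definition L := 2*N+1.
Definition c (k : nat) : nat := enum_rank (x k).
Definition y (p : nat) : bool := blk (c (p %/ L)) (p %% L).

Lemma Npos : 0 < N. Proof. by apply/card_gt0P; exists (x 0). Qed.
Lemma Lpos : 0 < L. Proof. rewrite /L; lia. Qed.
Lemma c_lt k : c k < N. Proof. exact: ltn_ord. Qed.

Lemma y_blk k s : s <= L -> y (L*k+s) = blk (c k) s.
Proof.
rewrite leq_eqVlt => /orP [/eqP -> | hs].
  have -> : L*k+L = (k.+1)*L by rewrite mulnC mulSn addnC.
  rewrite /y mulnK ?Lpos // modnMl /blk /=.
  have := c_lt k; have hL : L = 2*N+1 by [].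
  case: ifP => ? ?; lia.
rewrite /y mulnC divnMDl ?Lpos // modnMDl.
by rewrite divn_small // modn_small // addn0.
Qed.

Lemma y_quasi : quasiperiodic y.
Proof.
exists 3, [tuple true; false; true]; split => // p.
have hr : p %% L < 2*N+1 by rewrite ltn_mod Lpos.
have [s [hs1 [hs2 [b0 [b1 b2]]]]] := @cover N (c (p %/ L)) (p %% L) (c_lt _) hr.
have hL : L = 2*N+1 by [].
have ep : p = L * (p %/ L) + p %% L by rewrite mulnC -divn_eq.
exists (L * (p %/ L) + s); split.
  move: ep hs1; set k := p %/ L; set r := p %% L => ep hs1; lia.
apply: eq_from_tnth => t; rewrite tnth_mktuple.
case: t => [[|[|[|t]]] ht] //=.
- by rewrite addn0 y_blk //; lia.
- by rewrite -addnA y_blk //; first (apply/negbTE); [ |lia].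
- by rewrite -addnA y_blk //; lia.
Qed.


Definition dec (f : nat -> bool) : A :=
  if [pick a | [forall s : 'I_L, blk (enum_rank a) s == f s]] is Some a then a else x 0.

Lemma dec_spec k f : (forall s, s < L -> f s = blk (c k) s) -> dec f = x k.
Proof.
move=> H; rewrite /dec; case: pickP => [a /forallP Ha | Hn].
  apply: enum_rank_inj; apply/val_inj => /=.
  apply: (@blk_inj N); [exact: ltn_ord | exact: c_lt | ].
  move=> s hs; have := Ha (Ordinal hs); move/eqP => ->; exact: H.
have := Hn (x k); move/negP; case; apply/forallP => s; apply/eqP.
by rewrite H.
Qed.

Definition d n (w : (L*n).-tuple bool) : n.-tuple A :=
  [tuple dec (fun s => nth false w (L*k+s)) | k < n].

Lemma fx n i : factor_at x i n = d n (factor_at y (L*i) (L*n)).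
Proof.
apply: eq_from_tnth => t; rewrite !tnth_mktuple; symmetry; apply: dec_spec => s hs.
have h : L*t+s < L*n.
  have := ltn_ord t; move: hs; set L' := L => hs ht; nia.
rewrite (_ : nth _ _ _ = tnth (factor_at y (L*i) (L*n)) (Ordinal h)); last first.
  by rewrite (tnth_nth false).
by rewrite tnth_mktuple /= addnA -mulnDr y_blk // ltnW.
Qed.

Definition e n (z : 'I_L * (L*n).-tuple A) : n.-tuple bool :=
  [tuple blk (enum_rank (nth (x 0) z.2 ((z.1 + k) %/ L))) ((z.1 + k) %% L) | k < n].

Lemma fy n p : 0 < n -> factor_at y p n =
   e n (Ordinal (ltn_pmod p Lpos), factor_at x (p %/ L) (L*n)).
Proof.
move=> n0; apply: eq_from_tnth => t; rewrite !tnth_mktuple /=.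
have h : (p %% L + t) %/ L < L * n.
  rewrite ltn_divLR ?Lpos //.
  have := ltn_ord t; have := ltn_pmod p Lpos; have : 3 <= L by have := Npos; rewrite /L; lia.
  move: n0; set L' := L; set r := p %% L => n0 h3 hr ht.
  have a1 : L' <= L' * n by rewrite leq_pmulr.
  have a2 : n <= L' * n by rewrite leq_pmull; lia.
  have a3 : L' * n * 3 <= L' * n * L' by rewrite leq_mul2l h3 orbT.
  lia.
rewrite (_ : nth _ _ _ = tnth (factor_at x (p %/ L) (L*n)) (Ordinal h)); last first.
  by rewrite (tnth_nth (x 0)).
rewrite tnth_mktuple /= /y.
have -> : p + t = (p %/ L) * L + (p %% L + t) by rewrite addnA -divn_eq.
by rewrite divnMDl ?Lpos // modnMDl.
Qed.

Lemma compl1 n : complexity x n <= complexity y (L * n).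
Proof.
rewrite /complexity.
apply: (leq_trans _ (leq_imset_card (@d n) _)); apply: subset_leq_card.
apply/subsetP => t; rewrite inE => /asboolP [i ->].
apply/imsetP; exists (factor_at y (L*i) (L*n)); last exact: fx.
by rewrite inE; apply/asboolP; exists (L*i).
Qed.

Lemma compl2 n : 0 < n -> complexity y n <= L * complexity x (L * n).
Proof.
move=> n0; rewrite /complexity.
set Sx := [set t : (L*n).-tuple A | _].
have -> : L * #|Sx| = #|setX [set: 'I_L] Sx| by rewrite cardsX cardsT card_ord.
apply: (leq_trans _ (leq_imset_card (@e n) (setX [set: 'I_L] Sx))).
  apply: subset_leq_card.
  apply/subsetP => t; rewrite inE => /asboolP [p ->].
  apply/imsetP; exists (Ordinal (ltn_pmod p Lpos), factor_at x (p %/ L) (L*n)); last first.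
  by apply: fy.
by rewrite !inE /=; apply/asboolP; exists (p %/ L).
Qed.

End Main.

Theorem mainTheorem1 (A : finType) (x : nat -> A) :
  exists (B : finType) (y : nat -> B),
    quasiperiodic y /\ complexity_equivalent x y.
Proof.
exists bool, (@y A x); split; first exact: y_quasi.
exists (@L A); split; first exact: Lpos.
move=> n n1; split.
  apply: (leq_trans (@compl1 A x n)); apply: leq_pmull; exact: Lpos.
exact: compl2.
Qed.
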